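(* Let $x_{m_1}<\dots<x_2<x_1<w<y_1<y_2<\dots<y_{m_2}$ be real numbers, and let $\mathfrak x_1,\dots,\mathfrak x_{m_1-1}$, $\mathfrak y_1,\dots,\mathfrak y_{m_2-1}$, $\mathfrak w$ be real numbers with $\mathfrak w\neq0$. For $\zeta\in\mathbb C$ with $\operatorname{Im}\zeta\ge0$ define $\mu_i=\operatorname{angle}(\zeta-x_{i+1},\zeta-x_i)$ ($1\le i\le m_1-1$), $\nu_i=\operatorname{angle}(\zeta-y_i,\zeta-y_{i+1})$ ($1\le i\le m_2-1$), and $\alpha=\operatorname{angle}(\zeta-x_1,\zeta-w)$. Then there exists $\varepsilon>0$ such that for all $\zeta$ with $\operatorname{Im}\zeta\ge0$ and $0<|\zeta-w|<\varepsilon$, $$\sum_{i=1}^{m_1-1}\mathfrak x_i\mu_i+\mathfrak w\alpha+\sum_{i=1}^{m_2-1}\mathfrak y_i\nu_i=0$$ holds if and only if $\zeta\in\mathbb R$ and $\zeta>w$. The same statement holds if $\alpha$ is replaced by $\tilde\alpha=\operatorname{angle}(\zeta-w,\zeta-y_1)$ and the condition $\zeta>w$ is replaced by $\zeta<w$.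
   Context: For nonzero complex numbers $u,v$, $\operatorname{angle}(u,v)$ denotes the angle from the vector $u$ to the vector $v$, i.e. $\arg(v/u)$; in all uses above (real points $a<b$ and $\operatorname{Im}\zeta\ge0$), $\operatorname{angle}(\zeta-a,\zeta-b)\in[0,\pi]$ is the angle at $\zeta$ subtended by the segment $[a,b]$. *)

(* Defs.v *)
From Stdlib Require Import Reals.
From Coquelicot Require Import Coquelicot.
Open Scope R_scope.

(* Principal argument of a complex number, with values in (-PI, PI]
   (Carg 0 = 0, irrelevant here). *)
Definition Carg (z : C) : R :=
  let a := Re z in let b := Im z in
  if Rlt_dec 0 a then atan (b / a)
  else if Rlt_dec a 0 then
    (if Rle_dec 0 b then atan (b / a) + PI else atan (b / a) - PI)
  else if Rlt_dec 0 b then PI / 2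
  else if Rlt_dec b 0 then - (PI / 2)
  else 0.

Definition angle (u v : C) : R := Carg (Cdiv v u).

Fixpoint sum1 (k : nat) (f : nat -> R) : R :=
  match k with
  | O => 0
  | S k' => sum1 k' f + f k
  end.

(* Main.v *)
Require Import Defs.
From Stdlib Require Import Reals.
From Coquelicot Require Import Coquelicot.
Open Scope R_scope.
From Stdlib Require Import Lra Psatz.

Lemma atan_pos_bounds t : 0 < t -> t / (1 + t^2) <= atan t <= t.
Proof.
  intros Ht.
  destruct (MVT_cor2 atan (fun x => / (1 + x^2)) 0 t Ht) as [c [Hc1 Hc2]].
  { intros c _. apply derivable_pt_lim_atan. }
  rewrite atan_0, Rminus_0_r, Rminus_0_r in Hc1. rewrite Hc1.
  assert (H1 : 0 < 1 + c^2) by nra.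
  assert (H2 : c^2 <= t^2) by nra.
  split.
  - unfold Rdiv. rewrite Rmult_comm. apply Rmult_le_compat_r; [lra|].
    apply Rinv_le_contravar; lra.
  - assert (/ (1 + c^2) <= 1).
    { rewrite <- Rinv_1. apply Rinv_le_contravar; nra. }
    nra.
Qed.

Lemma atan_abs_le t : Rabs (atan t) <= Rabs t.
Proof.
  destruct (Rtotal_order t 0) as [H|[H|H]].
  - pose proof (atan_pos_bounds (-t) ltac:(lra)) as [_ B].
    rewrite atan_opp in B. pose proof (atan_bound t).
    assert (atan t <= 0).
    { pose proof (atan_pos_bounds (-t) ltac:(lra)) as [A _].
      rewrite atan_opp in A. assert (0 < -t/(1+(-t)^2)).
      { apply Rdiv_lt_0_compat; nra. } lra. }
    rewrite !Rabs_left1; lra.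
  - subst; rewrite atan_0; lra.
  - pose proof (atan_pos_bounds t H) as [A B].
    assert (0 < t/(1+t^2)) by (apply Rdiv_lt_0_compat; nra).
    rewrite !Rabs_right; lra.
Qed.

Lemma atan_lower t : 0 < t -> (1/2) * (t / (1 + t)) <= atan t.
Proof.
  intros Ht.
  assert (Hq : t / (1+t) <= 1).
  { apply Rmult_le_reg_r with (1+t); [lra|]. unfold Rdiv.
    rewrite Rmult_assoc, Rinv_l; lra. }
  destruct (Rle_dec t 1).
  - pose proof (atan_pos_bounds t Ht) as [A _].
    assert (t / 2 <= t / (1 + t^2)).
    { unfold Rdiv. apply Rmult_le_compat_l; [lra|].
      apply Rinv_le_contravar; nra. }
    assert (t / (1+t) <= t).
    { apply Rmult_le_reg_r with (1+t); [lra|]. unfold Rdiv.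
      rewrite Rmult_assoc, Rinv_l; nra. }
    lra.
  - assert (atan 1 <= atan t).
    { destruct (Req_dec t 1); [subst; lra|]. left; apply atan_increasing; lra. }
    rewrite atan_1 in H. pose proof PI2_1. lra.
Qed.

Lemma Carg_repos z : 0 < Re z -> Rabs (Carg z) <= Rabs (Im z) / Re z.
Proof.
  intros H. unfold Carg. destruct (Rlt_dec 0 (Re z)); [|lra].
  eapply Rle_trans; [apply atan_abs_le|].
  unfold Rdiv. rewrite Rabs_mult, Rabs_inv, (Rabs_right (Re z)); lra.
Qed.

Lemma Carg_impos z : 0 < Im z -> (1/2) * (Im z / (Rabs (Re z) + Im z)) <= Carg z.
Proof.
  intros H. set (a := Re z). set (b := Im z). fold a b in H.
  assert (Hr : b / (Rabs a + b) <= 1).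
  { apply Rmult_le_reg_r with (Rabs a + b); [pose proof (Rabs_pos a); lra|]. unfold Rdiv.
      rewrite Rmult_assoc, Rinv_l; [pose proof (Rabs_pos a); lra|pose proof (Rabs_pos a); lra]. }
  assert (Hr0 : 0 <= b / (Rabs a + b)).
  { apply Rdiv_le_0_compat; pose proof (Rabs_pos a); lra. }
  pose proof PI2_1.
  unfold Carg; fold a b.
  destruct (Rlt_dec 0 a).
  - pose proof (atan_lower (b/a) ltac:(apply Rdiv_lt_0_compat; lra)).
    replace (b / a / (1 + b / a)) with (b / (Rabs a + b)) in H1; [lra|].
    rewrite Rabs_right by lra. field. lra.
  - destruct (Rlt_dec a 0).
    + destruct (Rle_dec 0 b); [|lra]. pose proof (atan_bound (b/a)). lra.
    + destruct (Rlt_dec 0 b); lra.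
Qed.

Lemma Carg_negreal z : Re z < 0 -> Im z = 0 -> Carg z = PI.
Proof.
  intros H1 H2. unfold Carg. rewrite H2.
  destruct (Rlt_dec 0 (Re z)); [lra|]. destruct (Rlt_dec (Re z) 0); [|lra].
  destruct (Rle_dec 0 0); [|lra]. unfold Rdiv; rewrite Rmult_0_l, atan_0; lra.
Qed.

Lemma Re_ang z p q : Re (Cdiv (Cminus z (RtoC q)) (Cminus z (RtoC p))) =
  ((Re z - q) * (Re z - p) + Im z ^ 2) / ((Re z - p) ^ 2 + Im z ^ 2).
Proof. destruct z as [a b]. simpl. rewrite Ropp_0, Rplus_0_r.
  change (a + - p) with (a - p); change (a + - q) with (a - q); unfold Rdiv; ring. Qed.

Lemma Im_ang z p q : Im (Cdiv (Cminus z (RtoC q)) (Cminus z (RtoC p))) =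
  (Im z * (q - p)) / ((Re z - p) ^ 2 + Im z ^ 2).
Proof. destruct z as [a b]. simpl. rewrite Ropp_0, Rplus_0_r.
  change (a + - p) with (a - p); change (a + - q) with (a - q); unfold Rdiv; ring. Qed.

Lemma ang_small z p q : 0 <= Im z -> 0 < (Re z - p) * (Re z - q) ->
  Rabs (angle (Cminus z (RtoC p)) (Cminus z (RtoC q))) <=
  Im z * Rabs (q - p) / ((Re z - p) * (Re z - q)).
Proof.
  intros Hb HP. unfold angle.
  set (a := Re z) in *. set (b := Im z) in *.
  assert (HD : 0 < (a - p)^2 + b^2).
  { assert (a - p <> 0) by (intro E; rewrite E in HP; lra). nra. }
  assert (HRe : 0 < Re (Cdiv (Cminus z (RtoC q)) (Cminus z (RtoC p)))).
  { rewrite Re_ang. fold a b. apply Rdiv_lt_0_compat; nra. }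
  eapply Rle_trans; [apply Carg_repos; exact HRe|].
  rewrite Re_ang, Im_ang. fold a b.
  replace (Rabs (b * (q - p) / ((a - p) ^ 2 + b ^ 2)) /
     (((a - q) * (a - p) + b ^ 2) / ((a - p) ^ 2 + b ^ 2)))
   with (b * Rabs (q - p) / ((a - q) * (a - p) + b ^ 2)).
  2:{ unfold Rdiv. rewrite !Rabs_mult, Rabs_inv, (Rabs_right b), (Rabs_right ((a - p) ^ 2 + b ^ 2)) by lra.
      field. split; nra. }
  unfold Rdiv. apply Rmult_le_compat_l.
  - apply Rmult_le_pos; [lra | apply Rabs_pos].
  - apply Rinv_le_contravar; nra.
Qed.

Lemma ang_lower z p q : 0 < Im z -> p < q ->
  (1/2) * (Im z * (q - p) / (Rabs ((Re z - q) * (Re z - p) + Im z ^ 2) + Im z * (q - p)))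
  <= angle (Cminus z (RtoC p)) (Cminus z (RtoC q)).
Proof.
  intros Hb Hpq. unfold angle.
  pose proof (Carg_impos (Cdiv (Cminus z (RtoC q)) (Cminus z (RtoC p)))) as H.
  rewrite Re_ang, Im_ang in H.
  set (a := Re z) in *. set (b := Im z) in *.
  assert (HD : 0 < (a - p)^2 + b^2) by (assert (0 < b^2) by (apply pow_lt; lra); pose proof (pow2_ge_0 (a-p)); lra).
  set (D := (a - p)^2 + b^2) in *.
  replace (b * (q - p) / (Rabs ((a - q) * (a - p) + b ^ 2) + b * (q - p))) with
   (b * (q - p) / D / (Rabs (((a - q) * (a - p) + b ^ 2) / D) + b * (q - p) / D)).
  - apply H. apply Rdiv_lt_0_compat; nra.
  - unfold Rdiv. rewrite Rabs_mult, Rabs_inv, (Rabs_right D) by lra.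
    field. pose proof (Rabs_pos ((a - q) * (a - p) + b ^ 2)). split; nra.
Qed.

Lemma ang_zero z p q : Im z = 0 -> 0 < (Re z - p) * (Re z - q) ->
  angle (Cminus z (RtoC p)) (Cminus z (RtoC q)) = 0.
Proof.
  intros Hb HP. pose proof (ang_small z p q ltac:(lra) HP). rewrite Hb in H.
  unfold Rdiv in H. rewrite !Rmult_0_l in H. pose proof (Rabs_pos (angle (Cminus z (RtoC p)) (Cminus z (RtoC q)))).
  apply Rabs_eq_0. lra.
Qed.

Lemma ang_pi z p q : Im z = 0 -> (Re z - p) * (Re z - q) < 0 ->
  angle (Cminus z (RtoC p)) (Cminus z (RtoC q)) = PI.
Proof.
  intros Hb HP. unfold angle. apply Carg_negreal.
  - rewrite Re_ang, Hb. assert (a : Re z - p <> 0) by (intro E; rewrite E in HP; lra).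
    unfold Rdiv. apply Rmult_neg_pos; [nra|]. apply Rinv_0_lt_compat. nra.
  - rewrite Im_ang, Hb. unfold Rdiv. ring.
Qed.

Lemma key_lower fw C eps b A den k S :
  0 < eps -> 0 < b -> 0 < k -> 0 < den -> den <= 4 * eps * k ->
  (1/2) * (b * k / den) <= A -> eps <= Rabs fw / (16 * (Rabs C + 1)) ->
  Rabs S <= b * C -> S + fw * A <> 0.
Proof.
  intros He Hb Hk Hd Hden HA Heps HS.
  assert (H1 : b / (8 * eps) <= A).
  { eapply Rle_trans; [|exact HA].
    assert (b * k / den >= b * k / (4 * eps * k)).
    { unfold Rdiv. apply Rle_ge. apply Rmult_le_compat_l; [nra|]. apply Rinv_le_contravar; lra. }
    replace (b * k / (4 * eps * k)) with (b / (4 * eps)) in H by (field; lra).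
    replace (b / (8 * eps)) with ((1/2) * (b / (4 * eps))) by (field; lra). lra. }
  assert (HC1 : 0 < Rabs C + 1) by (pose proof (Rabs_pos C); lra).
  assert (H2 : 16 * eps * (Rabs C + 1) <= Rabs fw).
  { apply Rmult_le_compat_r with (r := 16 * (Rabs C + 1)) in Heps; [|lra].
    unfold Rdiv in Heps. rewrite Rmult_assoc, Rinv_l in Heps; nra. }
  assert (H3 : Rabs fw * (b / (8 * eps)) >= 2 * (Rabs C + 1) * b).
  { apply Rle_ge. apply Rmult_le_reg_r with (8 * eps); [lra|].
    replace (Rabs fw * (b / (8 * eps)) * (8 * eps)) with (Rabs fw * b) by (field; lra).
    nra. }
  assert (HA0 : 0 < A).
  { assert (0 < b / (8 * eps)) by (apply Rdiv_lt_0_compat; lra). lra. }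
  assert (H4 : Rabs (fw * A) >= Rabs fw * (b / (8 * eps))).
  { rewrite Rabs_mult, (Rabs_right A) by lra. apply Rle_ge, Rmult_le_compat_l; [apply Rabs_pos|lra]. }
  assert (H5 : Rabs S <= Rabs C * b).
  { pose proof (Rle_abs C). nra. }
  intro E. assert (fw * A = - S) by lra. rewrite H, Rabs_Ropp in H4. nra.
Qed.

Lemma sum1_bound k f g b : (forall i, (1 <= i <= k)%nat -> Rabs (f i) <= b * g i) ->
  Rabs (sum1 k f) <= b * sum1 k g.
Proof.
  induction k; intros H; simpl.
  - rewrite Rabs_R0; lra.
  - eapply Rle_trans; [apply Rabs_triang|].
    rewrite Rmult_plus_distr_l. apply Rplus_le_compat.
    + apply IHk. intros i Hi; apply H; lia.
    + apply H; lia.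
Qed.

Lemma x_mono m1 (x : nat -> R) : (forall i : nat, (1 <= i)%nat -> (i < m1)%nat -> x (S i) < x i) ->
  forall i, (1 <= i <= m1)%nat -> x i <= x 1%nat.
Proof.
  intros Hx i Hi. induction i; [lia|].
  destruct (Nat.eq_dec i 0); [subst; lra|].
  pose proof (Hx i ltac:(lia) ltac:(lia)). pose proof (IHi ltac:(lia)). lra.
Qed.

Lemma y_mono m2 (y : nat -> R) : (forall i : nat, (1 <= i)%nat -> (i < m2)%nat -> y i < y (S i)) ->
  forall i, (1 <= i <= m2)%nat -> y 1%nat <= y i.
Proof.
  intros Hy i Hi. induction i; [lia|].
  destruct (Nat.eq_dec i 0); [subst; lra|].
  pose proof (Hy i ltac:(lia) ltac:(lia)). pose proof (IHi ltac:(lia)). lra.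
Qed.

Lemma term_bound (f p q b P dd : R) (angl : R) :
  0 <= b -> 0 < dd -> dd <= P -> Rabs angl <= b * Rabs (q - p) / P ->
  Rabs (f * angl) <= b * (Rabs f * (Rabs (q - p) / dd)).
Proof.
  intros Hb Hdd HP Ha. rewrite Rabs_mult.
  assert (b * Rabs (q - p) / P <= b * Rabs (q - p) / dd).
  { unfold Rdiv. apply Rmult_le_compat_l; [pose proof (Rabs_pos (q-p)); nra|].
    apply Rinv_le_contravar; lra. }
  replace (b * (Rabs f * (Rabs (q - p) / dd))) with (Rabs f * (b * Rabs (q - p) / dd)) by (unfold Rdiv; ring).
  apply Rmult_le_compat_l; [apply Rabs_pos|lra].
Qed.

Lemma side_bound m1 m2 (x y : nat -> R) w fx fy dl z
  (Hx : forall i : nat, (1 <= i)%nat -> (i < m1)%nat -> x (S i) < x i)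
  (Hy : forall i : nat, (1 <= i)%nat -> (i < m2)%nat -> y i < y (S i))
  (Hdl : 0 < dl) (Hd1 : 2 * dl <= w - x 1%nat) (Hd2 : 2 * dl <= y 1%nat - w)
  (Hb : 0 <= Im z) (Ha : Rabs (Re z - w) < dl) :
  Rabs (sum1 (m1 - 1) (fun i => fx i * angle (Cminus z (RtoC (x (S i)))) (Cminus z (RtoC (x i))))
   + sum1 (m2 - 1) (fun i => fy i * angle (Cminus z (RtoC (y i))) (Cminus z (RtoC (y (S i))))))
  <= Im z * (sum1 (m1 - 1) (fun i => Rabs (fx i) * (Rabs (x i - x (S i)) / (dl * dl)))
           + sum1 (m2 - 1) (fun i => Rabs (fy i) * (Rabs (y (S i) - y i) / (dl * dl)))).
Proof.
  assert (Ha2 : w - dl <= Re z <= w + dl) by (apply Rabs_le_between'; lra). clear Ha.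
  eapply Rle_trans; [apply Rabs_triang|]. rewrite Rmult_plus_distr_l.
  apply Rplus_le_compat; apply sum1_bound; intros i Hi.
  - pose proof (x_mono m1 x Hx i ltac:(lia)). pose proof (Hx i ltac:(lia) ltac:(lia)).
    apply term_bound with (P := (Re z - x (S i)) * (Re z - x i)); auto.
    + nra.
    + nra.
    + apply ang_small; auto. nra.
  - pose proof (y_mono m2 y Hy i ltac:(lia)). pose proof (Hy i ltac:(lia) ltac:(lia)).
    apply term_bound with (P := (Re z - y i) * (Re z - y (S i))); auto.
    + nra.
    + nra.
    + apply ang_small; auto. nra.
Qed.

Lemma Cmod_sub_w z w eps : 0 < Cmod (Cminus z (RtoC w)) < eps ->
  0 < (Re z - w)^2 + Im z^2 /\ Rabs (Re z - w) < eps /\ Rabs (Im z) < eps.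
Proof.
  intros [H1 H2].
  pose proof (Cmod2_alt (Cminus z (RtoC w))) as E.
  replace (Re (Cminus z (RtoC w))) with (Re z - w) in E by (destruct z; simpl; ring).
  replace (Im (Cminus z (RtoC w))) with (Im z) in E by (destruct z; simpl; ring).
  set (m := Cmod (Cminus z (RtoC w))) in *. set (a := Re z - w) in *. set (b := Im z) in *.
  assert (Hsq : a^2 + b^2 < eps^2) by (rewrite <- E; simpl; nra).
  split; [rewrite <- E; simpl; nra|].
  simpl in Hsq.
  split; apply Rabs_def1; nra.
Qed.

Theorem lemma2p3
  (m1 m2 : nat) (x y : nat -> R) (w : R)
  (fx fy : nat -> R) (fw : R)
  (Hm1 : (1 <= m1)%nat) (Hm2 : (1 <= m2)%nat)
  (Hx : forall i : nat, (1 <= i)%nat -> (i < m1)%nat -> x (S i) < x i)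
  (Hx1 : x 1%nat < w) (Hy1 : w < y 1%nat)
  (Hy : forall i : nat, (1 <= i)%nat -> (i < m2)%nat -> y i < y (S i))
  (Hfw : fw <> 0) :
  (exists eps : R, 0 < eps /\
     forall z : C, 0 <= Im z -> 0 < Cmod (Cminus z (RtoC w)) < eps ->
       (sum1 (m1 - 1) (fun i => fx i * angle (Cminus z (RtoC (x (S i)))) (Cminus z (RtoC (x i))))
        + fw * angle (Cminus z (RtoC (x 1%nat))) (Cminus z (RtoC w))
        + sum1 (m2 - 1) (fun i => fy i * angle (Cminus z (RtoC (y i))) (Cminus z (RtoC (y (S i)))))
        = 0
        <-> (Im z = 0 /\ Re z > w)))
  /\
  (exists eps : R, 0 < eps /\
     forall z : C, 0 <= Im z -> 0 < Cmod (Cminus z (RtoC w)) < eps ->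
       (sum1 (m1 - 1) (fun i => fx i * angle (Cminus z (RtoC (x (S i)))) (Cminus z (RtoC (x i))))
        + fw * angle (Cminus z (RtoC w)) (Cminus z (RtoC (y 1%nat)))
        + sum1 (m2 - 1) (fun i => fy i * angle (Cminus z (RtoC (y i))) (Cminus z (RtoC (y (S i)))))
        = 0
        <-> (Im z = 0 /\ Re z < w))).
Proof.
  set (dl := Rmin (w - x 1%nat) (y 1%nat - w) / 2).
  assert (Hdl : 0 < dl) by (unfold dl; apply Rmin_case; lra).
  assert (Hd1 : 2 * dl <= w - x 1%nat) by (unfold dl; pose proof (Rmin_l (w - x 1%nat) (y 1%nat - w)); lra).
  assert (Hd2 : 2 * dl <= y 1%nat - w) by (unfold dl; pose proof (Rmin_r (w - x 1%nat) (y 1%nat - w)); lra).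
  set (C := sum1 (m1 - 1) (fun i => Rabs (fx i) * (Rabs (x i - x (S i)) / (dl * dl)))
           + sum1 (m2 - 1) (fun i => Rabs (fy i) * (Rabs (y (S i) - y i) / (dl * dl)))).
  assert (HC1 : 0 < Rabs C + 1) by (pose proof (Rabs_pos C); lra).
  assert (Hfw' : 0 < Rabs fw) by (apply Rabs_pos_lt; auto).
  set (eps := Rmin dl (Rabs fw / (16 * (Rabs C + 1)))).
  assert (Heps0 : 0 < eps).
  { unfold eps; apply Rmin_case; [lra|]. apply Rdiv_lt_0_compat; lra. }
  assert (Heps1 : eps <= dl) by apply Rmin_l.
  assert (Heps2 : eps <= Rabs fw / (16 * (Rabs C + 1))) by apply Rmin_r.
  split; exists eps; split; auto; intros z Hb Hm;
  destruct (Cmod_sub_w z w eps Hm) as [Hpos [Ha Hbe]];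
  pose proof (side_bound m1 m2 x y w fx fy dl z Hx Hy Hdl Hd1 Hd2 Hb ltac:(lra)) as HS; fold C in HS; clearbody C;
  set (Sx := sum1 (m1 - 1) _) in *; set (Sy := sum1 (m2 - 1) _) in *;
  rewrite Rabs_lt_between in Ha; rewrite Rabs_right in Hbe by lra.
  - destruct Hb as [Hb|Hb].
    + split; [|intros [H _]; lra].
      intro E. exfalso. revert E.
      replace (Sx + fw * angle (Cminus z (RtoC (x 1%nat))) (Cminus z (RtoC w)) + Sy)
        with ((Sx + Sy) + fw * angle (Cminus z (RtoC (x 1%nat))) (Cminus z (RtoC w))) by ring.
      apply (key_lower fw C eps (Im z) _ (Rabs ((Re z - w) * (Re z - x 1%nat) + Im z ^ 2) + Im z * (w - x 1%nat)) (w - x 1%nat) (Sx + Sy)); auto; try lra.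
      * pose proof (Rabs_pos ((Re z - w) * (Re z - x 1%nat) + Im z ^ 2)). nra.
      * assert (Rabs ((Re z - w) * (Re z - x 1%nat) + Im z ^ 2) <=
                Rabs (Re z - w) * (eps + (w - x 1%nat)) + eps * eps).
        { eapply Rle_trans; [apply Rabs_triang|]. rewrite Rabs_mult, (Rabs_right (Im z ^ 2)) by nra.
          apply Rplus_le_compat; [|nra]. apply Rmult_le_compat_l; [apply Rabs_pos|].
          apply Rabs_le; lra. }
        assert (Rabs (Re z - w) <= eps) by (apply Rabs_le; lra). nra.
      * apply ang_lower; lra.
    + symmetry in Hb. assert (HS0 : Sx + Sy = 0).
      { rewrite Hb, Rmult_0_l in HS. apply Rabs_eq_0. pose proof (Rabs_pos (Sx + Sy)). lra. }
      assert (Haw : Re z <> w) by (intro E; rewrite E, Hb in Hpos; lra).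
      destruct (Rle_lt_dec (Re z) w) as [Hl|Hl].
      * rewrite (ang_pi z) by (auto; nra). split; [|intros [_ H]; lra].
        intro E. assert (fw * PI = 0) by lra. apply Rmult_integral in H. pose proof PI_RGT_0. lra.
      * rewrite (ang_zero z) by (auto; nra). split; [intros; split; lra|]. intros; lra.
  - destruct Hb as [Hb|Hb].
    + split; [|intros [H _]; lra].
      intro E. exfalso. revert E.
      replace (Sx + fw * angle (Cminus z (RtoC w)) (Cminus z (RtoC (y 1%nat))) + Sy)
        with ((Sx + Sy) + fw * angle (Cminus z (RtoC w)) (Cminus z (RtoC (y 1%nat)))) by ring.
      apply (key_lower fw C eps (Im z) _ (Rabs ((Re z - y 1%nat) * (Re z - w) + Im z ^ 2) + Im z * (y 1%nat - w)) (y 1%nat - w) (Sx + Sy)); auto; try lra.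
      * pose proof (Rabs_pos ((Re z - y 1%nat) * (Re z - w) + Im z ^ 2)). nra.
      * assert (Rabs ((Re z - y 1%nat) * (Re z - w) + Im z ^ 2) <=
                (eps + (y 1%nat - w)) * Rabs (Re z - w) + eps * eps).
        { eapply Rle_trans; [apply Rabs_triang|]. rewrite Rabs_mult, (Rabs_right (Im z ^ 2)) by nra.
          apply Rplus_le_compat; [|nra]. apply Rmult_le_compat_r; [apply Rabs_pos|].
          apply Rabs_le; lra. }
        assert (Rabs (Re z - w) <= eps) by (apply Rabs_le; lra). nra.
      * apply ang_lower; lra.
    + symmetry in Hb. assert (HS0 : Sx + Sy = 0).
      { rewrite Hb, Rmult_0_l in HS. apply Rabs_eq_0. pose proof (Rabs_pos (Sx + Sy)). lra. }
      assert (Haw : Re z <> w) by (intro E; rewrite E, Hb in Hpos; lra).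
      destruct (Rle_lt_dec (Re z) w) as [Hl|Hl].
      * rewrite (ang_zero z) by (auto; nra). split; [intros; split; lra|]. intros; lra.
      * rewrite (ang_pi z) by (auto; nra). split; [|intros [_ H]; lra].
        intro E. assert (fw * PI = 0) by lra. apply Rmult_integral in H. pose proof PI_RGT_0. lra.
Qed.
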